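(* Let $S=\{a,b,c,d,u,v,w,x\}$ be a set of letters and let $R_1=\{uav^{-1},wbv^{-1},udx^{-1},wcx^{-1}\}$, $R_2=\{bvw^{-1},cxw^{-1},avu^{-1},dxu^{-1}\}$, $R_3=\{vbw^{-1},xcw^{-1},uxd^{-1},uva^{-1}\}$, $R_4=\{dxu^{-1},avu^{-1},vwb^{-1},xwc^{-1}\}$, $R_5=\{vua^{-1},vwb^{-1},xwc^{-1},xud^{-1}\}$. For each $i\in\{1,2,3,4,5\}$, let $G_i$ be the group defined by $\langle S\mid R_i\rangle$ (identifying $S$ with its image in $G_i$). Then $\langle S\mid R_i\rangle$ is a restricted triangular presentation of $G_i$, and $S$ satisfies all of conditions (1)–(5) except condition $(i)$, which fails.
   Context: A presentation $\langle S\mid R\rangle$ of a group $G$ (with $S$ identified with a finite generating subset of $G$) is a restricted triangular presentation if: $S\cap S^{-1}=\emptyset$; $R=\{a\cdot b\cdot c^{-1}\mid a,b,c\in S,\ abc^{-1}=e\text{ in }G\}$ and $\langle S\mid R\rangle$ presents $G$; there are no $a,b,c\in S$ with $abc=e$ in $G$; and for $a,b,c\in S$, $abc\in S$ implies $ab\in S$ and $bc\in S$. Conditions (1)–(5) on $S$ (all equalities in $G$, all variables ranging over $S$): (1) If $ua=wb\in S$ and $ud=wc\in S$ with $u\neq w$, $a\neq d$, then there is $k\in S$ with $w=uk$ or $ua=udk$. (2) If $bv=cx\in S$ and $av=dx\in S$ with $v\neq x$, $a\neq b$, then there is $k\in S$ with $v=kx$ or $av=kbv$. (3) If $ux\in S$,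 $uv\in S$, $vb=xc\in S$ with $v\neq x$, then there is $k\in S$ with $k=uvb$ or $v=xk$. (4) If $vw\in S$, $xw\in S$, $dx=av\in S$ with $v\neq x$, then there is $k\in S$ with $k=avw$ or $x=kv$. (5) If $wv,wx,uv,ux\in S$ with $v\neq x$, $u\neq w$, then there is $k\in S$ with $w=ku$ or $x=vk$. *)

(* Defs.v *)
(* Groups given by presentations <S | R> are
   modelled by their word problem: words over S ⊔ S^{-1} modulo the smallest
   congruence containing the free cancellations and the relators. *)
From Stdlib Require Import List.
Import ListNotations.
Set Implicit Arguments.

Section Presentation.
Variable X : Type.

(* a generator or its formal inverse: (s, false) = s, (s, true) = s^{-1} *)
Definition gen := (X * bool)%type.
Definition word := list gen.
Definition ltr (s : X) : gen := (s, false).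
Definition inv (s : X) : gen := (s, true).

Inductive geq (R : list word) : word -> word -> Prop :=
| geq_refl w : geq R w w
| geq_sym w1 w2 : geq R w1 w2 -> geq R w2 w1
| geq_trans w1 w2 w3 : geq R w1 w2 -> geq R w2 w3 -> geq R w1 w3
| geq_ctx p q w1 w2 : geq R w1 w2 -> geq R (p ++ w1 ++ q) (p ++ w2 ++ q)
| geq_free s e : geq R [(s, e); (s, negb e)] []
| geq_rel r : In r R -> geq R r [].

Definition eqG (R : list word) (l1 l2 : list X) : Prop :=
  geq R (map ltr l1) (map ltr l2).

Definition inS (R : list word) (l : list X) : Prop :=
  exists s : X, eqG R l [s].

(* <S | R> is a restricted triangular presentation of the group it defines
   (S being all of X, identified with its image in G). *)
Definition restricted_triangular (R : list word) : Prop :=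
  (* S is identified with its image: distinct letters stay distinct in G *)
  (forall s t : X, eqG R [s] [t] -> s = t) /\
  (forall s t : X, ~ geq R [ltr s] [inv t]) /\
  (forall r, In r R -> exists a b c : X, r = [ltr a; ltr b; inv c]) /\
  (forall a b c : X, geq R [ltr a; ltr b; inv c] [] -> In [ltr a; ltr b; inv c] R) /\
  (forall a b c : X, ~ eqG R [a; b; c] []) /\
  (forall a b c : X, inS R [a; b; c] -> inS R [a; b] /\ inS R [b; c]).

Definition cond1 (R : list word) : Prop :=
  forall u w a b c d : X,
    eqG R [u; a] [w; b] -> inS R [u; a] ->
    eqG R [u; d] [w; c] -> inS R [u; d] ->
    u <> w -> a <> d ->
    exists k : X, eqG R [w] [u; k] \/ eqG R [u; a] [u; d; k].

Definition cond2 (R : list word) : Prop :=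
  forall a b c d v x : X,
    eqG R [b; v] [c; x] -> inS R [b; v] ->
    eqG R [a; v] [d; x] -> inS R [a; v] ->
    v <> x -> a <> b ->
    exists k : X, eqG R [v] [k; x] \/ eqG R [a; v] [k; b; v].

Definition cond3 (R : list word) : Prop :=
  forall u v x b c : X,
    inS R [u; x] -> inS R [u; v] ->
    eqG R [v; b] [x; c] -> inS R [v; b] ->
    v <> x ->
    exists k : X, eqG R [k] [u; v; b] \/ eqG R [v] [x; k].

Definition cond4 (R : list word) : Prop :=
  forall v w x d a : X,
    inS R [v; w] -> inS R [x; w] ->
    eqG R [d; x] [a; v] -> inS R [d; x] ->
    v <> x ->
    exists k : X, eqG R [k] [a; v; w] \/ eqG R [x] [k; v].

Definition cond5 (R : list word) : Prop :=
  forall u v w x : X,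
    inS R [w; v] -> inS R [w; x] -> inS R [u; v] -> inS R [u; x] ->
    v <> x -> u <> w ->
    exists k : X, eqG R [w] [k; u] \/ eqG R [x] [v; k].

Definition cond (n : nat) (R : list word) : Prop :=
  match n with
  | 1 => cond1 R | 2 => cond2 R | 3 => cond3 R | 4 => cond4 R | 5 => cond5 R
  | _ => True
  end.

End Presentation.

Inductive letter := La | Lb | Lc | Ld | Lu | Lv | Lw | Lx.

Definition rel3 (p q r : letter) : word letter := [ltr p; ltr q; inv r].

Definition R1 : list (word letter) :=
  [rel3 Lu La Lv; rel3 Lw Lb Lv; rel3 Lu Ld Lx; rel3 Lw Lc Lx].
Definition R2 : list (word letter) :=
  [rel3 Lb Lv Lw; rel3 Lc Lx Lw; rel3 La Lv Lu; rel3 Ld Lx Lu].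
Definition R3 : list (word letter) :=
  [rel3 Lv Lb Lw; rel3 Lx Lc Lw; rel3 Lu Lx Ld; rel3 Lu Lv La].
Definition R4 : list (word letter) :=
  [rel3 Ld Lx Lu; rel3 La Lv Lu; rel3 Lv Lw Lb; rel3 Lx Lw Lc].
Definition R5 : list (word letter) :=
  [rel3 Lv Lu La; rel3 Lv Lw Lb; rel3 Lx Lw Lc; rel3 Lx Lu Ld].

Definition Rs (i : nat) : list (word letter) :=
  match i with
  | 1 => R1 | 2 => R2 | 3 => R3 | 4 => R4 | _ => R5
  end.

(* Main.v *)
Require Import Defs.
From Stdlib Require Import List Bool Lia.
Import ListNotations.

Definition letter_eq_dec : forall x y : letter, {x = y} + {x <> y}.
Proof. decide equality. Defined.
Definition gen_eq_dec : forall x y : gen letter, {x = y} + {x <> y}.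
Proof. intros [a b] [c d]. destruct (letter_eq_dec a c), (bool_dec b d); subst;
  [left; reflexivity | right; congruence ..]. Defined.
Arguments gen_eq_dec : simpl never.
Definition word_eq_dec : forall x y : word letter, {x = y} + {x <> y} := list_eq_dec gen_eq_dec.

Definition flip (g : gen letter) : gen letter := (fst g, negb (snd g)).
Lemma flip_flip g : flip (flip g) = g.
Proof. destruct g as [s e]; unfold flip; simpl; rewrite negb_involutive; reflexivity. Qed.

Definition act (g : gen letter) (z : word letter) : word letter :=
  match z with
  | h :: t => if gen_eq_dec h (flip g) then t else g :: z
  | [] => [g]
  end.
Definition actw (w z : word letter) : word letter := fold_right act z w.

Fixpoint reduced (w : word letter) : Prop :=
  match w with
  | g :: t => (match t with h :: _ => h <> flip g | [] => True end) /\ reduced t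
  | [] => True
  end.

Lemma act_red g z : reduced z -> reduced (act g z).
Proof.
  destruct z as [|h t]; simpl; intros H.
  - tauto.
  - destruct (gen_eq_dec h (flip g)); simpl; tauto.
Qed.

Lemma actw_red w z : reduced z -> reduced (actw w z).
Proof. induction w; simpl; auto using act_red. Qed.

Lemma act_cancel g z : reduced z -> act g (act (flip g) z) = z.
Proof.
  destruct z as [|h t]; simpl; intros H.
  - destruct (gen_eq_dec (flip g) (flip g)); [reflexivity | congruence].
  - rewrite flip_flip. destruct (gen_eq_dec h g).
    + subst h. destruct t as [|h' t]; simpl; auto.
      destruct H as [H1 _]. destruct (gen_eq_dec h' (flip g)); congruence.
    + simpl. destruct (gen_eq_dec (flip g) (flip g)); congruence.
Qed.

Lemma act_cancel' g z : reduced z -> act (flip g) (act g z) = z.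
Proof. intro H. rewrite <- (flip_flip g) at 2. apply act_cancel; auto. Qed.

Lemma actw_app w1 w2 z : actw (w1 ++ w2) z = actw w1 (actw w2 z).
Proof. unfold actw. apply fold_right_app. Qed.

Lemma actw_nf w z : reduced z -> actw w z = actw (actw w []) z.
Proof.
  induction w as [|g w IH]; simpl; intros Hz; auto.
  rewrite IH by auto.
  destruct (actw w []) as [|h y] eqn:E; simpl; auto.
  destruct (gen_eq_dec h (flip g)); simpl; auto.
  subst h. rewrite act_cancel; auto. apply actw_red; auto.
Qed.

Definition invw (w : word letter) : word letter := rev (map flip w).

Lemma actw_inv1 w z : reduced z -> actw w (actw (invw w) z) = z.
Proof.
  revert z; induction w as [|g w IH]; intros z Hz; simpl; auto.
  unfold invw in *; simpl. rewrite actw_app. simpl.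
  rewrite IH by (apply act_red; auto). apply act_cancel; auto.
Qed.

Lemma actw_inv2 w z : reduced z -> actw (invw w) (actw w z) = z.
Proof.
  revert z; induction w as [|g w IH]; intros z Hz; simpl; auto.
  unfold invw in *; simpl. rewrite actw_app. simpl.
  rewrite act_cancel' by (apply actw_red; auto). apply IH; auto.
Qed.

Section Pres.
Variable R : list (word letter).
Variable sub : letter -> word letter.

Definition substg (g : gen letter) : word letter :=
  if snd g then invw (sub (fst g)) else sub (fst g).
Definition T (w : word letter) : word letter := flat_map substg w.
Definition nf (w : word letter) : word letter := actw (T w) [].

Lemma T_app w1 w2 : T (w1 ++ w2) = T w1 ++ T w2.
Proof. unfold T. apply flat_map_app. Qed.

Hypothesis Hrel : forall r, In r R -> nf r = [].

Lemma sound w1 w2 : geq R w1 w2 -> forall z, reduced z -> actw (T w1) z = actw (T w2) z.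
Proof.
  induction 1; intros z Hz; auto.
  - rewrite IHgeq; auto.
  - rewrite IHgeq1, IHgeq2; auto.
  - rewrite !T_app, !actw_app. f_equal.
    apply IHgeq. apply actw_red; auto.
  - unfold T; simpl. rewrite app_nil_r, actw_app. destruct e; unfold substg; simpl.
    + rewrite actw_inv2; auto.
    + rewrite actw_inv1; auto.
  - rewrite actw_nf by auto. unfold nf in Hrel. rewrite Hrel; auto.
Qed.

Lemma nf_sound w1 w2 : geq R w1 w2 -> nf w1 = nf w2.
Proof. intro H. unfold nf. apply sound; simpl; auto. Qed.

Lemma geq_app w1 w2 w3 w4 : geq R w1 w2 -> geq R w3 w4 -> geq R (w1 ++ w3) (w2 ++ w4).
Proof.
  intros H1 H2. apply geq_trans with (w2 ++ w3).
  - pose proof (geq_ctx [] w3 H1) as H. simpl in H. exact H.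
  - pose proof (geq_ctx w2 [] H2) as H. rewrite !app_nil_r in H. exact H.
Qed.
Arguments geq_app {w1 w2 w3 w4}.

Lemma geq_cancel w : geq R (w ++ invw w) [].
Proof.
  induction w as [|g w IH]; simpl.
  - apply geq_refl.
  - unfold invw in *. simpl. 
    apply geq_trans with ([g] ++ [] ++ [flip g]).
    + replace (g :: w ++ rev (map flip w) ++ [flip g]) with
        ([g] ++ (w ++ rev (map flip w)) ++ [flip g]) by (simpl; rewrite app_assoc; reflexivity).
      apply geq_ctx; auto.
    + destruct g as [s e]. apply geq_free.
Qed.

Hypothesis Hsub : forall s, geq R [ltr s] (sub s).

Lemma geq_substg g : geq R [g] (substg g).
Proof.
  destruct g as [s [|]]; unfold substg; simpl; [|apply Hsub].
  apply geq_trans with ([inv s] ++ (sub s ++ invw (sub s))).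
  - apply geq_sym. pose proof (geq_app (geq_refl R [inv s]) (geq_cancel (sub s))) as H.
    rewrite app_nil_r in H. exact H.
  - apply geq_trans with (([inv s] ++ [ltr s]) ++ invw (sub s)).
    + rewrite <- app_assoc. apply geq_app; [apply geq_refl|].
      apply geq_app; [apply geq_sym, Hsub | apply geq_refl].
    + pose proof (geq_app (geq_free R s true) (geq_refl R (invw (sub s)))) as H.
      exact H.
Qed.

Lemma geq_T w : geq R w (T w).
Proof.
  induction w as [|g w IH]; simpl.
  - apply geq_refl.
  - apply (geq_app (w1 := [g]) (geq_substg g) IH).
Qed.

Lemma geq_actw v : geq R v (actw v []).
Proof.
  induction v as [|g v IH]; simpl.
  - apply geq_refl.
  - apply geq_trans with (g :: actw v []).
    + apply (geq_app (w1 := [g]) (geq_refl _ _) IH).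
    + destruct (actw v []) as [|h y]; simpl; [apply geq_refl|].
      destruct (gen_eq_dec h (flip g)); [|apply geq_refl].
      subst h. destruct g as [s e].
      apply (geq_ctx [] y (geq_free R s e)).
Qed.

Lemma geq_nf w : geq R w (nf w).
Proof. eapply geq_trans; [apply geq_T | apply geq_actw]. Qed.

Lemma geq_iff w1 w2 : geq R w1 w2 <-> nf w1 = nf w2.
Proof.
  split; [apply nf_sound|]. intro H.
  eapply geq_trans; [apply geq_nf|]. rewrite H. apply geq_sym, geq_nf.
Qed.

End Pres.
Definition letters : list letter := [La; Lb; Lc; Ld; Lu; Lv; Lw; Lx].
Lemma in_letters s : In s letters.
Proof. destruct s; simpl; tauto. Qed.
Definition allL (f : letter -> bool) := forallb f letters.
Definition exL (f : letter -> bool) := existsb f letters.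
Lemma allL_true f : allL f = true -> forall s, f s = true.
Proof. unfold allL; rewrite forallb_forall; intros H s; apply H, in_letters. Qed.
Lemma exL_true f : exL f = true -> exists s, f s = true.
Proof. unfold exL; rewrite existsb_exists; intros [s [_ H]]; eauto. Qed.
Lemma exL_intro f s : f s = true -> exL f = true.
Proof. intro H; unfold exL; apply existsb_exists; eauto using in_letters. Qed.

Definition beq (w1 w2 : word letter) : bool := if word_eq_dec w1 w2 then true else false.
Lemma beq_true w1 w2 : beq w1 w2 = true <-> w1 = w2.
Proof. unfold beq; destruct (word_eq_dec w1 w2); split; congruence. Qed.
Definition leqb (s t : letter) : bool := if letter_eq_dec s t then true else false.
Lemma leqb_true s t : leqb s t = true -> s = t.
Proof. unfold leqb; destruct (letter_eq_dec s t); congruence. Qed.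
Lemma leqb_false s t : s <> t -> leqb s t = false.
Proof. unfold leqb; destruct (letter_eq_dec s t); congruence. Qed.

Section Bool.
Variable sub : letter -> word letter.
Definition eqGb (l1 l2 : list letter) : bool := beq (nf sub (map (@ltr letter) l1)) (nf sub (map (@ltr letter) l2)).
Definition inSb (l : list letter) : bool := exL (fun s => eqGb l [s]).

Definition cond1b := allL (fun u => allL (fun w => allL (fun a => allL (fun b => allL (fun c => allL (fun d =>
  if eqGb [u;a] [w;b] then if inSb [u;a] then if eqGb [u;d] [w;c] then if inSb [u;d] then
  if leqb u w then true else if leqb a d then true else
  exL (fun k => if eqGb [w] [u;k] then true else eqGb [u;a] [u;d;k])
  else true else true else true else true)))))).
Definition cond2b := allL (fun a => allL (fun b => allL (fun c => allL (fun d => allL (fun v => allL (fun x =>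
  if eqGb [b;v] [c;x] then if inSb [b;v] then if eqGb [a;v] [d;x] then if inSb [a;v] then
  if leqb v x then true else if leqb a b then true else
  exL (fun k => if eqGb [v] [k;x] then true else eqGb [a;v] [k;b;v])
  else true else true else true else true)))))).
Definition cond3b := allL (fun u => allL (fun v => allL (fun x => allL (fun b => allL (fun c =>
  if inSb [u;x] then if inSb [u;v] then if eqGb [v;b] [x;c] then if inSb [v;b] then
  if leqb v x then true else
  exL (fun k => if eqGb [k] [u;v;b] then true else eqGb [v] [x;k])
  else true else true else true else true))))).
Definition cond4b := allL (fun v => allL (fun w => allL (fun x => allL (fun d => allL (fun a =>
  if inSb [v;w] then if inSb [x;w] then if eqGb [d;x] [a;v] then if inSb [d;x] then
  if leqb v x then true else
  exL (fun k => if eqGb [k] [a;v;w] then true else eqGb [x] [k;v])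
  else true else true else true else true))))).
Definition cond5b := allL (fun u => allL (fun v => allL (fun w => allL (fun x =>
  if inSb [w;v] then if inSb [w;x] then if inSb [u;v] then if inSb [u;x] then
  if leqb v x then true else if leqb u w then true else
  exL (fun k => if eqGb [w] [k;u] then true else eqGb [x] [v;k])
  else true else true else true else true)))).

Definition rt1b := allL (fun s => allL (fun t => if eqGb [s] [t] then leqb s t else true)).
Definition rt2b := allL (fun s => allL (fun t => negb (beq (nf sub [ltr s]) (nf sub [inv t])))).
Definition rt5b := allL (fun a => allL (fun b => allL (fun c => negb (eqGb [a;b;c] [])))).
Definition rt6b := allL (fun a => allL (fun b => allL (fun c =>
  if inSb [a;b;c] then (if inSb [a;b] then inSb [b;c] else false) else true))).
Definition rt4b (R : list (word letter)) := allL (fun a => allL (fun b => allL (fun c =>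
  if beq (nf sub [ltr a; ltr b; inv c]) [] then existsb (beq [ltr a; ltr b; inv c]) R else true))).
End Bool.

Section Pres2.
Variable R : list (word letter).
Variable sub : letter -> word letter.
Hypothesis Hrel : forall r, In r R -> nf sub r = [].
Hypothesis Hsub : forall s, geq R [ltr s] (sub s).

Lemma eqG_iff l1 l2 : eqG R l1 l2 <-> eqGb sub l1 l2 = true.
Proof. unfold eqG, eqGb. rewrite beq_true. apply geq_iff; auto. Qed.
Lemma inS_iff l : inS R l <-> inSb sub l = true.
Proof.
  unfold inS, inSb. split.
  - intros [s H]. apply exL_intro with s. apply eqG_iff; auto.
  - intro H. apply exL_true in H. destruct H as [s H]. exists s. apply eqG_iff; auto.
Qed.

Ltac spec B x := let H := fresh in pose proof (allL_true _ B x) as H; cbv beta in H; clear B; rename H into B.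
Ltac usehyps B := repeat match goal with
  | H : eqG _ _ _ |- _ => apply eqG_iff in H; rewrite H in B; clear H
  | H : inS _ _ |- _ => apply inS_iff in H; rewrite H in B; clear H
  | H : ?s <> ?t |- _ => rewrite (leqb_false _ _ H) in B; clear H
  end; cbn beta iota in B.
Ltac finish B := apply exL_true in B; destruct B as [k B]; exists k;
  match type of B with (if ?c then _ else _) = _ =>
    destruct c eqn:E; [left; apply eqG_iff; exact E | right; apply eqG_iff; exact B] end.

Lemma cond1_ok : cond1b sub = true -> cond1 R.
Proof.
  intros B u w a b c d H1 H2 H3 H4 H5 H6.
  spec B u; spec B w; spec B a; spec B b; spec B c; spec B d. usehyps B. finish B.
Qed.
Lemma cond2_ok : cond2b sub = true -> cond2 R.
Proof.
  intros B a b c d v x H1 H2 H3 H4 H5 H6.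
  spec B a; spec B b; spec B c; spec B d; spec B v; spec B x. usehyps B. finish B.
Qed.
Lemma cond3_ok : cond3b sub = true -> cond3 R.
Proof.
  intros B u v x b c H1 H2 H3 H4 H5.
  spec B u; spec B v; spec B x; spec B b; spec B c. usehyps B. finish B.
Qed.
Lemma cond4_ok : cond4b sub = true -> cond4 R.
Proof.
  intros B v w x d a H1 H2 H3 H4 H5.
  spec B v; spec B w; spec B x; spec B d; spec B a. usehyps B. finish B.
Qed.
Lemma cond5_ok : cond5b sub = true -> cond5 R.
Proof.
  intros B u v w x H1 H2 H3 H4 H5 H6.
  spec B u; spec B v; spec B w; spec B x. usehyps B. finish B.
Qed.

Lemma rt_ok : rt1b sub = true -> rt2b sub = true -> rt4b sub R = true ->
  rt5b sub = true -> rt6b sub = true ->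
  (forall r, In r R -> exists a b c : letter, r = [ltr a; ltr b; inv c]) ->
  restricted_triangular R.
Proof.
  intros B1 B2 B4 B5 B6 H3. unfold restricted_triangular.
  split; [|split; [|split; [exact H3|split; [|split]]]].
  - intros s t H. spec B1 s; spec B1 t. usehyps B1. apply leqb_true; auto.
  - intros s t H. spec B2 s; spec B2 t. apply (geq_iff _ _ Hrel Hsub) in H.
    rewrite H in B2. unfold beq in B2. destruct (word_eq_dec _ _); [discriminate|congruence].
  - intros a b c H. spec B4 a; spec B4 b; spec B4 c. apply (geq_iff _ _ Hrel Hsub) in H.
    rewrite H in B4. cbn beta iota in B4. apply existsb_exists in B4.
    destruct B4 as [r [Hr E]]. apply beq_true in E. subst; auto.
  - intros a b c H. spec B5 a; spec B5 b; spec B5 c. apply eqG_iff in H. rewrite H in B5. discriminate.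
  - intros a b c H. spec B6 a; spec B6 b; spec B6 c. apply inS_iff in H. rewrite H in B6.
    cbn beta iota in B6. destruct (inSb sub [a;b]) eqn:E; [|discriminate].
    split; apply inS_iff; auto.
Qed.
End Pres2.
Arguments geq_app {R w1 w2 w3 w4}.

Lemma rel_r R p q r : In (rel3 p q r) R -> geq R [ltr p; ltr q] [ltr r].
Proof.
  intro H. apply geq_trans with ([ltr p; ltr q] ++ [inv r; ltr r]).
  - apply geq_sym. pose proof (geq_app (geq_refl R [ltr p; ltr q]) (geq_free R r true)) as E.
    rewrite app_nil_r in E. exact E.
  - exact (geq_app (w1 := [ltr p; ltr q; inv r]) (geq_rel R _ H) (geq_refl R [ltr r])).
Qed.
Lemma rel_q R p q r : In (rel3 p q r) R -> geq R [ltr q] [inv p; ltr r].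
Proof.
  intro H. apply geq_trans with ([inv p; ltr p] ++ [ltr q]).
  - apply geq_sym. exact (geq_app (geq_free R p true) (geq_refl R [ltr q])).
  - exact (geq_app (w1 := [inv p]) (geq_refl R _) (rel_r _ _ _ _ H)).
Qed.
Lemma rel_p R p q r : In (rel3 p q r) R -> geq R [ltr p] [ltr r; inv q].
Proof.
  intro H. apply geq_trans with ([ltr p] ++ [ltr q; inv q]).
  - apply geq_sym. pose proof (geq_app (geq_refl R [ltr p]) (geq_free R q false)) as E.
    rewrite app_nil_r in E. exact E.
  - exact (geq_app (w1 := [ltr p; ltr q]) (rel_r _ _ _ _ H) (geq_refl R [inv q])).
Qed.

Definition sub1 (s : letter) : word letter := match s with
  | La => [inv Lu; ltr Lv] | Lb => [inv Lw; ltr Lv] | Ld => [inv Lu; ltr Lx] | Lc => [inv Lw; ltr Lx]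
  | s => [ltr s] end.
Definition sub2 (s : letter) : word letter := match s with
  | Lb => [ltr Lw; inv Lv] | Lc => [ltr Lw; inv Lx] | La => [ltr Lu; inv Lv] | Ld => [ltr Lu; inv Lx]
  | s => [ltr s] end.
Definition sub3 (s : letter) : word letter := match s with
  | Lb => [inv Lv; ltr Lw] | Lc => [inv Lx; ltr Lw] | Ld => [ltr Lu; ltr Lx] | La => [ltr Lu; ltr Lv]
  | s => [ltr s] end.
Definition sub4 (s : letter) : word letter := match s with
  | Lu => [ltr Ld; ltr Lx] | La => [ltr Ld; ltr Lx; inv Lv] | Lb => [ltr Lv; ltr Lw] | Lc => [ltr Lx; ltr Lw]
  | s => [ltr s] end.
Definition sub5 (s : letter) : word letter := match s with
  | La => [ltr Lv; ltr Lu] | Lb => [ltr Lv; ltr Lw] | Lc => [ltr Lx; ltr Lw] | Ld => [ltr Lx; ltr Lu]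
  | s => [ltr s] end.

Ltac inR := simpl; tauto.
Ltac relcheck := intros r H; simpl in H; repeat destruct H as [H|H]; try contradiction; subst; vm_compute; reflexivity.

Lemma Hrel1 : forall r, In r R1 -> nf sub1 r = []. Proof. relcheck. Qed.
Lemma Hrel2 : forall r, In r R2 -> nf sub2 r = []. Proof. relcheck. Qed.
Lemma Hrel3 : forall r, In r R3 -> nf sub3 r = []. Proof. relcheck. Qed.
Lemma Hrel4 : forall r, In r R4 -> nf sub4 r = []. Proof. relcheck. Qed.
Lemma Hrel5 : forall r, In r R5 -> nf sub5 r = []. Proof. relcheck. Qed.

Lemma Hsub1 : forall s, geq R1 [ltr s] (sub1 s).
Proof. destruct s; simpl; try apply geq_refl; apply rel_q with (r := _); inR. Qed.
Lemma Hsub2 : forall s, geq R2 [ltr s] (sub2 s).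
Proof. destruct s; simpl; try apply geq_refl; apply rel_p with (q := _); inR. Qed.
Lemma Hsub3 : forall s, geq R3 [ltr s] (sub3 s).
Proof. destruct s; simpl; try apply geq_refl; first [apply rel_q with (r:=_); inR | apply geq_sym, rel_r; inR]. Qed.
Lemma Hsub5 : forall s, geq R5 [ltr s] (sub5 s).
Proof. destruct s; simpl; try apply geq_refl; apply geq_sym, rel_r; inR. Qed.
Lemma Hsub4 : forall s, geq R4 [ltr s] (sub4 s).
Proof.
  assert (Hu : geq R4 [ltr Lu] [ltr Ld; ltr Lx]) by (apply geq_sym, rel_r; inR).
  destruct s; simpl; try apply geq_refl; try exact Hu; try (apply geq_sym, rel_r; inR).
  apply geq_trans with ([ltr Lu] ++ [inv Lv]).
  - apply rel_p with (q := Lv); inR.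
  - exact (geq_app Hu (geq_refl R4 [inv Lv])).
Qed.


Ltac hyp_tac Hr Hs := first [ apply (eqG_iff _ _ Hr Hs); vm_compute; reflexivity
                          | apply (inS_iff _ _ Hr Hs); vm_compute; reflexivity
                          | intro; discriminate ].

Lemma pres1 : restricted_triangular R1 /\ ~ cond 1 R1 /\
  (forall j : nat, 1 <= j <= 5 -> j <> 1 -> cond j R1).
Proof.
  split; [|split].
  - apply (rt_ok _ _ Hrel1 Hsub1); try (vm_compute; reflexivity).
    intros r H; simpl in H; repeat destruct H as [H|H]; try contradiction; subst; do 3 eexists; reflexivity.
  - simpl. intro H. destruct (H Lu Lw La Lb Lc Ld) as [k [Hk|Hk]]; try hyp_tac Hrel1 Hsub1;
      apply (eqG_iff _ _ Hrel1 Hsub1) in Hk; destruct k; vm_compute in Hk; discriminate.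
  - intros j Hj Hji. destruct j as [|[|[|[|[|[|j]]]]]]; try lia; simpl.
    + apply (cond2_ok _ _ Hrel1 Hsub1); vm_compute; reflexivity.
    + apply (cond3_ok _ _ Hrel1 Hsub1); vm_compute; reflexivity.
    + apply (cond4_ok _ _ Hrel1 Hsub1); vm_compute; reflexivity.
    + apply (cond5_ok _ _ Hrel1 Hsub1); vm_compute; reflexivity.
Qed.

Lemma pres2 : restricted_triangular R2 /\ ~ cond 2 R2 /\
  (forall j : nat, 1 <= j <= 5 -> j <> 2 -> cond j R2).
Proof.
  split; [|split].
  - apply (rt_ok _ _ Hrel2 Hsub2); try (vm_compute; reflexivity).
    intros r H; simpl in H; repeat destruct H as [H|H]; try contradiction; subst; do 3 eexists; reflexivity.
  - simpl. intro H. destruct (H La Lb Lc Ld Lv Lx) as [k [Hk|Hk]]; try hyp_tac Hrel2 Hsub2;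
      apply (eqG_iff _ _ Hrel2 Hsub2) in Hk; destruct k; vm_compute in Hk; discriminate.
  - intros j Hj Hji. destruct j as [|[|[|[|[|[|j]]]]]]; try lia; simpl.
    + apply (cond1_ok _ _ Hrel2 Hsub2); vm_compute; reflexivity.
    + apply (cond3_ok _ _ Hrel2 Hsub2); vm_compute; reflexivity.
    + apply (cond4_ok _ _ Hrel2 Hsub2); vm_compute; reflexivity.
    + apply (cond5_ok _ _ Hrel2 Hsub2); vm_compute; reflexivity.
Qed.

Lemma pres3 : restricted_triangular R3 /\ ~ cond 3 R3 /\
  (forall j : nat, 1 <= j <= 5 -> j <> 3 -> cond j R3).
Proof.
  split; [|split].
  - apply (rt_ok _ _ Hrel3 Hsub3); try (vm_compute; reflexivity).
    intros r H; simpl in H; repeat destruct H as [H|H]; try contradiction; subst; do 3 eexists; reflexivity.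
  - simpl. intro H. destruct (H Lu Lv Lx Lb Lc) as [k [Hk|Hk]]; try hyp_tac Hrel3 Hsub3;
      apply (eqG_iff _ _ Hrel3 Hsub3) in Hk; destruct k; vm_compute in Hk; discriminate.
  - intros j Hj Hji. destruct j as [|[|[|[|[|[|j]]]]]]; try lia; simpl.
    + apply (cond1_ok _ _ Hrel3 Hsub3); vm_compute; reflexivity.
    + apply (cond2_ok _ _ Hrel3 Hsub3); vm_compute; reflexivity.
    + apply (cond4_ok _ _ Hrel3 Hsub3); vm_compute; reflexivity.
    + apply (cond5_ok _ _ Hrel3 Hsub3); vm_compute; reflexivity.
Qed.

Lemma pres4 : restricted_triangular R4 /\ ~ cond 4 R4 /\
  (forall j : nat, 1 <= j <= 5 -> j <> 4 -> cond j R4).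
Proof.
  split; [|split].
  - apply (rt_ok _ _ Hrel4 Hsub4); try (vm_compute; reflexivity).
    intros r H; simpl in H; repeat destruct H as [H|H]; try contradiction; subst; do 3 eexists; reflexivity.
  - simpl. intro H. destruct (H Lv Lw Lx Ld La) as [k [Hk|Hk]]; try hyp_tac Hrel4 Hsub4;
      apply (eqG_iff _ _ Hrel4 Hsub4) in Hk; destruct k; vm_compute in Hk; discriminate.
  - intros j Hj Hji. destruct j as [|[|[|[|[|[|j]]]]]]; try lia; simpl.
    + apply (cond1_ok _ _ Hrel4 Hsub4); vm_compute; reflexivity.
    + apply (cond2_ok _ _ Hrel4 Hsub4); vm_compute; reflexivity.
    + apply (cond3_ok _ _ Hrel4 Hsub4); vm_compute; reflexivity.
    + apply (cond5_ok _ _ Hrel4 Hsub4); vm_compute; reflexivity.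
Qed.

Lemma pres5 : restricted_triangular R5 /\ ~ cond 5 R5 /\
  (forall j : nat, 1 <= j <= 5 -> j <> 5 -> cond j R5).
Proof.
  split; [|split].
  - apply (rt_ok _ _ Hrel5 Hsub5); try (vm_compute; reflexivity).
    intros r H; simpl in H; repeat destruct H as [H|H]; try contradiction; subst; do 3 eexists; reflexivity.
  - simpl. intro H. destruct (H Lv Lu Lx Lw) as [k [Hk|Hk]]; try hyp_tac Hrel5 Hsub5;
      apply (eqG_iff _ _ Hrel5 Hsub5) in Hk; destruct k; vm_compute in Hk; discriminate.
  - intros j Hj Hji. destruct j as [|[|[|[|[|[|j]]]]]]; try lia; simpl.
    + apply (cond1_ok _ _ Hrel5 Hsub5); vm_compute; reflexivity.
    + apply (cond2_ok _ _ Hrel5 Hsub5); vm_compute; reflexivity.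
    + apply (cond3_ok _ _ Hrel5 Hsub5); vm_compute; reflexivity.
    + apply (cond4_ok _ _ Hrel5 Hsub5); vm_compute; reflexivity.
Qed.

Theorem mainTheorem7 :
  forall i : nat, 1 <= i <= 5 ->
    restricted_triangular (Rs i) /\
    ~ cond i (Rs i) /\
    (forall j : nat, 1 <= j <= 5 -> j <> i -> cond j (Rs i)).
Proof.
  intros i Hi. destruct i as [|[|[|[|[|[|i]]]]]]; try lia;
    [exact pres1 | exact pres2 | exact pres3 | exact pres4 | exact pres5].
Qed.
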